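(* For any $a_0,\dots,a_{2n-1}\in L^1(I)$, whenever the Green's functions involved exist: 1. If $G_P[2T]\le0$ on $J\times J$, then $G_N[T]\le0$ on $I\times I$. 2. If $G_P[2T]\ge0$ on $J\times J$, then $G_N[T]\ge0$ on $I\times I$. 3. If $G_N[2T]\le0$ on $J\times J$, then $G_N[T]\le0$ on $I\times I$. 4. If $G_N[2T]\ge0$ on $J\times J$, then $G_N[T]\ge0$ on $I\times I$. 5. If $G_D[2T]\le0$ on $J\times J$, then $G_{M_2}[T]\le0$ on $I\times I$. 6. If $G_D[2T]\ge0$ on $J\times J$, then $G_{M_2}[T]\ge0$ on $I\times I$.
   Context: Fix $n\ge 1$, $T>0$, $I=[0,T]$, $J=[0,2T]$. $W^{2n,1}(K)$: $u\in C^{2n-1}(K)$ with $u^{(2n-1)}$ absolutely continuous. $Lu=u^{(2n)}+\sum_{k=0}^{2n-1}a_ku^{(k)}$ on $I$. $\widetilde L u=u^{(2n)}+\sum_{k=0}^{n-1}(\hat a_{2k+1}u^{(2k+1)}+\tilde a_{2k}u^{(2k)})$ on $J$, where $\tilde a_{2k}=a_{2k}$, $\hat a_{2k+1}=a_{2k+1}$ on $I$, and $\tilde a_{2k}(t)=a_{2k}(2T-t)$, $\hat a_{2k+1}(t)=-a_{2k+1}(2T-t)$ for $t\in(T,2T]$. An operator $M$ is nonresonant in $X$ if $Mu=0$ a.e., $u\in X$ forces $u\equiv0$; its Green's function $G$ then gives the unique solution $u(t)=\int G(t,s)\sigma(s)ds$ of $Mu=\sigma$, $u\in X$, for every integrable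 $\sigma$. $G_N[T]$, $G_{M_2}[T]$: Green's functions of $L$ on $\{u\in W^{2n,1}(I):u^{(2k+1)}(0)=u^{(2k+1)}(T)=0,\ k=0,\dots,n-1\}$ and on $\{u\in W^{2n,1}(I): u^{(2k)}(0)=u^{(2k+1)}(T)=0,\ k=0,\dots,n-1\}$. $G_P[2T]$, $G_N[2T]$, $G_D[2T]$: Green's functions of $\widetilde L$ on $\{u\in W^{2n,1}(J): u^{(k)}(0)=u^{(k)}(2T),\ k=0,\dots,2n-1\}$, $\{u\in W^{2n,1}(J): u^{(2k+1)}(0)=u^{(2k+1)}(2T)=0,\ k=0,\dots,n-1\}$, $\{u\in W^{2n,1}(J): u^{(2k)}(0)=u^{(2k)}(2T)=0,\ k=0,\dots,n-1\}$. *)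

(* Defs.v *)
(* The Lebesgue integral on a compact
   interval is introduced via the McShane (gauge) integral, which is one of
   the standard elementary definitions of the Lebesgue integral on [a,b]. *)
From Stdlib Require Import Reals Lra.
Open Scope R_scope.

Fixpoint sumR (m : nat) (f : nat -> R) : R :=
  match m with O => 0 | S m' => sumR m' f + f m' end.

Definition mcshane_fine (delta : R -> R) (a b : R) (m : nat) (x t : nat -> R) : Prop :=
  x O = a /\ x m = b /\
  (forall i, (i < m)%nat ->
     x i < x (S i) /\ a <= t i <= b /\
     t i - delta (t i) < x i /\ x (S i) < t i + delta (t i)).

Definition riemann_sum (f : R -> R) (m : nat) (x t : nat -> R) : R :=
  sumR m (fun i => f (t i) * (x (S i) - x i)).

Definition has_integral (f : R -> R) (a b v : R) : Prop :=
  a <= b /\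
  forall eps, 0 < eps ->
    exists delta : R -> R, (forall y, 0 < delta y) /\
      forall m x t, mcshane_fine delta a b m x t ->
        Rabs (riemann_sum f m x t - v) < eps.

Definition L1 (a b : R) (f : R -> R) : Prop := exists v, has_integral f a b v.

Definition negligible (N : R -> Prop) : Prop :=
  forall eps, 0 < eps ->
    exists c d : nat -> R,
      (forall y, N y -> exists k, c k < y < d k) /\
      (forall k, c k <= d k) /\
      (forall m, sumR m (fun k => d k - c k) < eps).

Definition ae_on (a b : R) (P : R -> Prop) : Prop :=
  negligible (fun y => a <= y <= b /\ ~ P y).

Definition has_deriv_in (a b : R) (f : R -> R) (t l : R) : Prop :=
  forall eps, 0 < eps -> exists del, 0 < del /\
    forall y, a <= y <= b -> y <> t -> Rabs (y - t) < del ->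
      Rabs ((f y - f t) / (y - t) - l) < eps.

Definition deriv_on (a b : R) (f g : R -> R) : Prop :=
  forall t, a <= t <= b -> has_deriv_in a b f t (g t).

Definition abs_cont (a b : R) (f : R -> R) : Prop :=
  forall eps, 0 < eps -> exists del, 0 < del /\
    forall (m : nat) (c d : nat -> R),
      (forall i, (i < m)%nat -> a <= c i /\ c i <= d i /\ d i <= b) ->
      (forall i j, (i < m)%nat -> (j < m)%nat -> i <> j -> d i <= c j \/ d j <= c i) ->
      sumR m (fun i => d i - c i) < del ->
      sumR m (fun i => Rabs (f (d i) - f (c i))) < eps.

(* D describes an element u = D 0 of W^{N,1}([a,b]) (N >= 1) together with its
   derivatives: D k = u^(k) on [a,b] for k <= N-1 (u in C^{N-1}),
   D (N-1) absolutely continuous, and D N = u^(N) almost everywhere. *)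
Definition W_sol (N : nat) (a b : R) (D : nat -> R -> R) : Prop :=
  (forall k, (k < N - 1)%nat -> deriv_on a b (D k) (D (S k))) /\
  abs_cont a b (D (N - 1)%nat) /\
  ae_on a b (fun t => has_deriv_in a b (D (N - 1)%nat) t (D N t)).

Definition op (N : nat) (c : nat -> R -> R) (D : nat -> R -> R) (t : R) : R :=
  D N t + sumR N (fun k => c k t * D k t).

Definition nonresonant (N : nat) (c : nat -> R -> R) (a b : R)
    (BC : (nat -> R -> R) -> Prop) : Prop :=
  forall D, W_sol N a b D -> BC D -> ae_on a b (fun t => op N c D t = 0) ->
    forall t, a <= t <= b -> D O t = 0.

Definition cont_on_square (a b : R) (G : R -> R -> R) : Prop :=
  forall t s, a <= t <= b -> a <= s <= b ->
    forall eps, 0 < eps -> exists del, 0 < del /\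
      forall t' s', a <= t' <= b -> a <= s' <= b ->
        Rabs (t' - t) < del -> Rabs (s' - s) < del ->
        Rabs (G t' s' - G t s) < eps.

(* G is the Green's function of M on X: M is nonresonant, G is the
   (continuous, order N >= 2) kernel, and for every integrable sigma the
   unique solution of M u = sigma, u in X, is u(t) = int_a^b G(t,s) sigma(s) ds. *)
Definition green_function (N : nat) (c : nat -> R -> R) (a b : R)
    (BC : (nat -> R -> R) -> Prop) (G : R -> R -> R) : Prop :=
  nonresonant N c a b BC /\
  cont_on_square a b G /\
  forall sigma, L1 a b sigma ->
    exists D, W_sol N a b D /\ BC D /\
      ae_on a b (fun t => op N c D t = sigma t) /\
      forall t, a <= t <= b -> has_integral (fun s => G t s * sigma s) a b (D O t).

Definition BC_N (n : nat) (L : R) (D : nat -> R -> R) : Prop :=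
  forall k, (k < n)%nat -> D (2 * k + 1)%nat 0 = 0 /\ D (2 * k + 1)%nat L = 0.
Definition BC_M2 (n : nat) (L : R) (D : nat -> R -> R) : Prop :=
  forall k, (k < n)%nat -> D (2 * k)%nat 0 = 0 /\ D (2 * k + 1)%nat L = 0.
Definition BC_P (n : nat) (L : R) (D : nat -> R -> R) : Prop :=
  forall k, (k < 2 * n)%nat -> D k 0 = D k L.
Definition BC_D (n : nat) (L : R) (D : nat -> R -> R) : Prop :=
  forall k, (k < n)%nat -> D (2 * k)%nat 0 = 0 /\ D (2 * k)%nat L = 0.

(* coefficients of tilde L on [0,2T]: even ones reflected, odd ones
   reflected with a sign change on (T,2T]. *)
Definition ext_coef (T : R) (a : nat -> R -> R) (k : nat) (t : R) : R :=
  if Rle_dec t T then a k t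
  else if Nat.odd k then - a k (2 * T - t) else a k (2 * T - t).

Definition nonpos_on (L : R) (G : R -> R -> R) : Prop :=
  forall t s, 0 <= t <= L -> 0 <= s <= L -> G t s <= 0.
Definition nonneg_on (L : R) (G : R -> R -> R) : Prop :=
  forall t s, 0 <= t <= L -> 0 <= s <= L -> 0 <= G t s.

(* Main.v *)
Require Import Defs.
From Stdlib Require Import Reals Lra Lia Classical.
Open Scope R_scope.

Lemma sumR_ext m f g : (forall i, (i < m)%nat -> f i = g i) -> sumR m f = sumR m g.
Proof. induction m; simpl; intros H; auto. rewrite IHm by (intros; apply H; lia). rewrite H by lia. reflexivity. Qed.

Lemma sumR_lin m f g p q : sumR m (fun i => p * f i + q * g i) = p * sumR m f + q * sumR m g.
Proof. induction m; simpl; [ring| rewrite IHm; ring]. Qed.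

Lemma sumR_minus m f g : sumR m (fun i => f i - g i) = sumR m f - sumR m g.
Proof. induction m; simpl; [ring| rewrite IHm; ring]. Qed.

Lemma sumR_plus m f g : sumR m (fun i => f i + g i) = sumR m f + sumR m g.
Proof. induction m; simpl; [ring| rewrite IHm; ring]. Qed.

Lemma sumR_le m f g : (forall i, (i<m)%nat -> f i <= g i) -> sumR m f <= sumR m g.
Proof. induction m; simpl; intros H; [lra|]. pose proof (H m ltac:(lia)). pose proof (IHm ltac:(intros; apply H; lia)). lra. Qed.

Lemma sumR_nonneg m f : (forall i, (i<m)%nat -> 0 <= f i) -> 0 <= sumR m f.
Proof. induction m; simpl; intros H; [lra|]. pose proof (H m ltac:(lia)). pose proof (IHm ltac:(intros; apply H; lia)). lra. Qed.

Lemma sumR_tel m x : sumR m (fun i => x (S i) - x i) = x m - x O.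
Proof. induction m; simpl; [ring| rewrite IHm; ring]. Qed.

Lemma sumR_mono_len m k h : (forall i, 0 <= h i) -> sumR m h <= sumR (m + k) h.
Proof. intros H; induction k. rewrite Nat.add_0_r; lra. rewrite Nat.add_succ_r. simpl. pose proof (H (m+k)%nat). lra. Qed.

Lemma sumR_double m h : sumR (2*m) h = sumR m (fun j => h (2*j)%nat) + sumR m (fun j => h (2*j+1)%nat).
Proof. induction m. simpl; ring. replace (2 * S m)%nat with (S (S (2*m))) by lia.
  change (sumR (S (S (2*m))) h) with (sumR (2*m) h + h (2*m)%nat + h (S (2*m))).
  change (sumR (S m) (fun j => h (2 * j)%nat)) with (sumR m (fun j => h (2 * j)%nat) + h (2*m)%nat).
  change (sumR (S m) (fun j => h (2 * j + 1)%nat)) with (sumR m (fun j => h (2 * j+1)%nat) + h (2*m+1)%nat).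
  rewrite IHm.
  replace (S (2*m)) with (2*m+1)%nat by lia. ring. Qed.

Lemma fine_mono d d' a b m x t : mcshane_fine d a b m x t -> (forall y, d y <= d' y) -> mcshane_fine d' a b m x t.
Proof. intros [H0 [H1 H2]] Hd. split; [auto|split;[auto|]]. intros i Hi. destruct (H2 i Hi) as [A [B [C E]]].
  pose proof (Hd (t i)). repeat split; lra. Qed.

Lemma riemann_lin f g p q m x t : riemann_sum (fun s => p * f s + q * g s) m x t = p * riemann_sum f m x t + q * riemann_sum g m x t.
Proof. unfold riemann_sum. rewrite <- sumR_lin. apply sumR_ext. intros; ring. Qed.

Lemma has_integral_lin f g a b u v p q : has_integral f a b u -> has_integral g a b v ->
  has_integral (fun s => p * f s + q * g s) a b (p*u + q*v).
Proof.
  intros [Hab Hf] [_ Hg]; split; auto. intros eps He.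
  pose proof (Rabs_pos p); pose proof (Rabs_pos q).
  set (e := eps / (2 * (Rabs p + Rabs q + 1))).
  assert (Heq : e * (2 * (Rabs p + Rabs q + 1)) = eps) by (unfold e; field; lra).
  assert (He' : 0 < e) by (unfold e; apply Rdiv_lt_0_compat; lra).
  destruct (Hf e He') as [d1 [Hd1 H1]]. destruct (Hg e He') as [d2 [Hd2 H2]].
  exists (fun y => Rmin (d1 y) (d2 y)). split. intros; apply Rmin_glb_lt; auto.
  intros m x t Hfine.
  pose proof (H1 m x t (fine_mono _ _ _ _ _ _ _ Hfine (fun y => Rmin_l _ _))) as A.
  pose proof (H2 m x t (fine_mono _ _ _ _ _ _ _ Hfine (fun y => Rmin_r _ _))) as B.
  rewrite riemann_lin.
  replace (p * riemann_sum f m x t + q * riemann_sum g m x t - (p * u + q * v)) with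
    (p * (riemann_sum f m x t - u) + q * (riemann_sum g m x t - v)) by ring.
  eapply Rle_lt_trans; [apply Rabs_triang|]. rewrite !Rabs_mult.
  assert (Rabs p * Rabs (riemann_sum f m x t - u) <= Rabs p * e) by (apply Rmult_le_compat_l; lra).
  assert (Rabs q * Rabs (riemann_sum g m x t - v) <= Rabs q * e) by (apply Rmult_le_compat_l; lra).
  nra.
Qed.

Lemma has_integral_ext f g a b v v' : (forall s, a <= s <= b -> f s = g s) -> v = v' ->
  has_integral f a b v -> has_integral g a b v'.
Proof.
  intros Hfg <- [Hab H]. split; auto. intros eps He. destruct (H eps He) as [d [Hd Hs]].
  exists d; split; auto. intros m x t F. replace (riemann_sum g m x t) with (riemann_sum f m x t). auto.
  unfold riemann_sum. apply sumR_ext. intros i Hi. destruct F as [_ [_ F]]. destruct (F i Hi) as [_ [T1 _]].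
  rewrite Hfg; auto.
Qed.

Lemma fine_append d a x y m xs ts tg : mcshane_fine d a x m xs ts -> x < y -> a <= tg <= y -> tg - d tg < x -> y < tg + d tg ->
  mcshane_fine d a y (S m) (fun i => if Nat.leb i m then xs i else y) (fun i => if Nat.ltb i m then ts i else tg).
Proof.
  intros [H0 [Hm Hi]] Hxy Htg H1 H2. split; [|split].
  - destruct (Nat.leb_spec 0 m); [auto|lia].
  - destruct (Nat.leb_spec (S m) m); [lia|auto].
  - intros i Hi'. destruct (Nat.leb_spec i m); [|lia]. destruct (Nat.ltb_spec i m).
    + destruct (Nat.leb_spec (S i) m); [|lia]. destruct (Hi i H3) as [A [B C]]. repeat split; lra.
    + assert (i = m) by lia. subst i. destruct (Nat.leb_spec (S m) m); [lia|]. rewrite Hm. repeat split; lra.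
Qed.

Lemma cousin d a b : (forall y, 0 < d y) -> a <= b -> exists m xs ts, mcshane_fine d a b m xs ts.
Proof.
  intros Hd Hab.
  set (P := fun x => exists m xs ts, mcshane_fine d a x m xs ts).
  set (E := fun x => a <= x <= b /\ P x).
  assert (Pa : P a).
  { exists O, (fun _ => a), (fun _ => a). split; [reflexivity|split;[reflexivity| intros; lia]]. }
  assert (Hb : bound E) by (exists b; intros x [[_ H] _]; exact H).
  assert (Hne : exists x, E x) by (exists a; split; [lra|exact Pa]).
  destruct (completeness E Hb Hne) as [s [Hub Hlub]].
  assert (Has : a <= s) by (apply Hub; split; [lra| exact Pa]).
  assert (Hsb : s <= b) by (apply Hlub; intros x [[_ H] _]; exact H).
  assert (Hx : exists x, E x /\ s - d s < x).
  { apply NNPP; intro Hn. assert (s <= s - d s). apply Hlub. intros x Ex. apply Rnot_lt_le. intro Hlt. apply Hn. exists x; auto.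
    specialize (Hd s); lra. }
  destruct Hx as [x [[[Hax Hxb] Px] Hsx]].
  assert (Hxs : x <= s) by (apply Hub; repeat split; auto).
  destruct (Req_dec x b) as [Exb|Nxb]. { rewrite <- Exb; exact Px. }
  pose proof (Hd s).
  set (y := Rmin b (s + d s / 2)).
  assert (Hy1 : y <= b) by apply Rmin_l.
  assert (Hy2 : y <= s + d s / 2) by apply Rmin_r.
  assert (Hy3 : y = b \/ y = s + d s / 2) by (unfold y, Rmin; destruct Rle_dec; auto).
  assert (Py : P y).
  { destruct Px as [m [xs [ts F]]]. eexists (S m), _, _. apply (fine_append d a x y m xs ts s F); try lra. }
  destruct Hy3 as [Hy3|Hy3]. { rewrite <- Hy3; exact Py. }
  exfalso. assert (y <= s). apply Hub. split; [lra|exact Py]. lra.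
Qed.

Lemma has_integral_nonneg f a b v : has_integral f a b v -> (forall s, a <= s <= b -> 0 <= f s) -> 0 <= v.
Proof.
  intros [Hab H] Hf. apply Rnot_lt_le; intro Hv.
  destruct (H (-v) ltac:(lra)) as [d [Hd Hfi]].
  destruct (cousin d a b Hd Hab) as [m [xs [ts F]]].
  specialize (Hfi m xs ts F). apply Rabs_def2 in Hfi.
  assert (0 <= riemann_sum f m xs ts).
  { unfold riemann_sum. apply sumR_nonneg. intros i Hi. destruct F as [_ [_ F]]. destruct (F i Hi) as [A [B _]].
    apply Rmult_le_pos; [apply Hf; auto| lra]. }
  lra.
Qed.

Definition ind (al be s : R) : R := if Rle_dec al s then if Rle_dec s be then 1 else 0 else 0.

Lemma ind_01 al be s : 0 <= ind al be s <= 1.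
Proof. unfold ind; repeat destruct Rle_dec; lra. Qed.

Ltac mm := repeat first [rewrite Rmin_left by lra | rewrite Rmin_right by lra | rewrite Rmax_left by lra | rewrite Rmax_right by lra].

Lemma mono_clamp l u x0 x1 : l <= u -> x0 <= x1 -> Rmax l (Rmin x0 u) <= Rmax l (Rmin x1 u).
Proof. intros. destruct (Rle_dec x0 u); destruct (Rle_dec x1 u); destruct (Rle_dec l x0); destruct (Rle_dec l x1); mm; lra. Qed.

Lemma mono_clamp' l u x0 x1 : l <= u -> x0 <= x1 -> Rmin u (Rmax x0 l) <= Rmin u (Rmax x1 l).
Proof. intros. destruct (Rle_dec x0 u); destruct (Rle_dec x1 u); destruct (Rle_dec l x0); destruct (Rle_dec l x1); mm; lra. Qed.

Definition gauge_ind (al be e y : R) : R :=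
  if Rlt_dec y al then (al - y)/2 else if Rlt_dec al y then
   (if Rlt_dec y be then Rmin (y-al) (be-y) / 2 else if Rlt_dec be y then (y - be)/2 else e) else e.

Lemma gauge_ind_pos al be e y : 0 < e -> 0 < gauge_ind al be e y.
Proof. intros. unfold gauge_ind. repeat destruct Rlt_dec; try lra. apply Rdiv_lt_0_compat; [|lra]. apply Rmin_glb_lt; lra. Qed.

Lemma ind_term al be e t x0 x1 : 0 < e -> 4 * e <= be - al -> x0 < x1 ->
  t - gauge_ind al be e t < x0 -> x1 < t + gauge_ind al be e t ->
  0 <= ind al be t * (x1 - x0) - (Rmax al (Rmin x1 be) - Rmax al (Rmin x0 be)) /\
  ind al be t * (x1 - x0) - (Rmax al (Rmin x1 be) - Rmax al (Rmin x0 be)) <=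
   (Rmax (al - e) (Rmin x1 al) - Rmax (al - e) (Rmin x0 al)) + (Rmin (be+e) (Rmax x1 be) - Rmin (be+e) (Rmax x0 be)).
Proof.
  intros He Hab Hx. unfold gauge_ind, ind.
  pose proof (Rmin_l (t-al) (be-t)). pose proof (Rmin_r (t-al) (be-t)).
  destruct (Rlt_dec t al); [|destruct (Rlt_dec al t); [destruct (Rlt_dec t be); [|destruct (Rlt_dec be t)]|]];
  intros H1 H2;
  destruct (Rle_dec al t); destruct (Rle_dec t be); try lra;
  destruct (Rle_dec x0 (al-e)); destruct (Rle_dec x0 al); destruct (Rle_dec x0 be); destruct (Rle_dec x0 (be+e));
  destruct (Rle_dec x1 (al-e)); destruct (Rle_dec x1 al); destruct (Rle_dec x1 be); destruct (Rle_dec x1 (be+e));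
  try lra; mm; lra.
Qed.

Lemma has_integral_ind a b al be : a <= al -> al < be -> be <= b -> has_integral (ind al be) a b (be - al).
Proof.
  intros Ha Hab Hb. split; [lra|]. intros eps He.
  set (e := Rmin (eps/4) ((be-al)/4)).
  assert (He1 : 0 < e) by (apply Rmin_glb_lt; lra).
  assert (He2 : e <= eps/4) by apply Rmin_l.
  assert (He3 : e <= (be-al)/4) by apply Rmin_r.
  exists (gauge_ind al be e). split; [intros; apply gauge_ind_pos; lra|].
  intros m x t F. destruct F as [H0 [Hm Hi]].
  assert (Hterm : forall i, (i < m)%nat ->
    0 <= ind al be (t i) * (x (S i) - x i) - (Rmax al (Rmin (x (S i)) be) - Rmax al (Rmin (x i) be)) /\
    ind al be (t i) * (x (S i) - x i) - (Rmax al (Rmin (x (S i)) be) - Rmax al (Rmin (x i) be)) <=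
    (Rmax (al - e) (Rmin (x (S i)) al) - Rmax (al - e) (Rmin (x i) al)) + (Rmin (be+e) (Rmax (x (S i)) be) - Rmin (be+e) (Rmax (x i) be))).
  { intros i Hi'. destruct (Hi i Hi') as [A [B [C D]]]. apply ind_term; lra. }
  assert (Heq : riemann_sum (ind al be) m x t - (be - al) =
     sumR m (fun i => ind al be (t i) * (x (S i) - x i) - (Rmax al (Rmin (x (S i)) be) - Rmax al (Rmin (x i) be)))).
  { rewrite sumR_minus. rewrite (sumR_tel m (fun y => Rmax al (Rmin (x y) be))). rewrite Hm, H0. unfold riemann_sum. mm. ring. }
  assert (L : 0 <= sumR m (fun i => ind al be (t i) * (x (S i) - x i) - (Rmax al (Rmin (x (S i)) be) - Rmax al (Rmin (x i) be)))).
  { apply sumR_nonneg. intros; apply Hterm; auto. }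
  assert (U : sumR m (fun i => ind al be (t i) * (x (S i) - x i) - (Rmax al (Rmin (x (S i)) be) - Rmax al (Rmin (x i) be)))
     <= sumR m (fun i => (Rmax (al - e) (Rmin (x (S i)) al) - Rmax (al - e) (Rmin (x i) al)) + (Rmin (be+e) (Rmax (x (S i)) be) - Rmin (be+e) (Rmax (x i) be)))).
  { apply sumR_le. intros; apply Hterm; auto. }
  rewrite sumR_plus in U. rewrite (sumR_tel m (fun y => Rmax (al - e) (Rmin (x y) al))) in U.
  rewrite (sumR_tel m (fun y => Rmin (be + e) (Rmax (x y) be))) in U. rewrite Hm, H0 in U.
  assert (Rmax (al - e) (Rmin b al) = al) by (mm; lra).
  assert (al - e <= Rmax (al - e) (Rmin a al)) by apply Rmax_l.
  assert (Rmin (be + e) (Rmax a be) = be) by (mm; lra).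
  assert (Rmin (be + e) (Rmax b be) <= be + e) by apply Rmin_l.
  rewrite Heq. apply Rabs_def1; lra.
Qed.

Lemma negligible_sub (A B : R -> Prop) : (forall y, A y -> B y) -> negligible B -> negligible A.
Proof. intros H HB eps He. destruct (HB eps He) as [c [d [H1 H2]]]. exists c, d. split; auto. Qed.

Lemma negligible_refl (A : R -> Prop) c : negligible A -> negligible (fun y => A (c - y)).
Proof.
  intros HA eps He. destruct (HA eps He) as [cs [ds [H1 [H2 H3]]]].
  exists (fun k => c - ds k), (fun k => c - cs k). split; [|split].
  - intros y Hy. destruct (H1 _ Hy) as [k Hk]. exists k. lra.
  - intros k. specialize (H2 k). lra.
  - intros m. rewrite (sumR_ext m _ (fun k => ds k - cs k)); auto. intros; ring.
Qed.

Lemma even_2j j : Nat.even (2*j) = true.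
Proof. induction j; auto. replace (2 * S j)%nat with (S (S (2*j))) by lia. simpl. exact IHj. Qed.
Lemma even_2j1 j : Nat.even (2*j+1) = false.
Proof. induction j; auto. replace (2 * S j + 1)%nat with (S (S (2*j+1))) by lia. simpl. exact IHj. Qed.
Lemma div2_2j1 j : Nat.div2 (2*j+1) = j.
Proof. replace (2*j+1)%nat with (S (2*j)) by lia. apply Nat.div2_succ_double. Qed.

Definition il (f g : nat -> R) (k : nat) : R := if Nat.even k then f (Nat.div2 k) else g (Nat.div2 k).

Lemma negligible_union (A B : R -> Prop) : negligible A -> negligible B -> negligible (fun y => A y \/ B y).
Proof.
  intros HA HB eps He. destruct (HA (eps/2) ltac:(lra)) as [c1 [d1 [A1 [A2 A3]]]].
  destruct (HB (eps/2) ltac:(lra)) as [c2 [d2 [B1 [B2 B3]]]].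
  exists (il c1 c2), (il d1 d2). split; [|split].
  - intros y [Hy|Hy].
    + destruct (A1 _ Hy) as [k Hk]. exists (2*k)%nat. unfold il. rewrite even_2j, Nat.div2_double. auto.
    + destruct (B1 _ Hy) as [k Hk]. exists (2*k+1)%nat. unfold il. rewrite even_2j1, div2_2j1. auto.
  - intros k. unfold il. destruct Nat.even; auto.
  - intros m. assert (Hnn : forall i, 0 <= il d1 d2 i - il c1 c2 i).
    { intros i. unfold il. destruct Nat.even; [specialize (A2 (Nat.div2 i))| specialize (B2 (Nat.div2 i))]; lra. }
    eapply Rle_lt_trans. apply (sumR_mono_len m m _ Hnn).
    replace (m + m)%nat with (2*m)%nat by lia. rewrite sumR_double.
    assert (E1 : sumR m (fun j => il d1 d2 (2*j)%nat - il c1 c2 (2*j)%nat) = sumR m (fun k => d1 k - c1 k)).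
    { apply sumR_ext; intros; unfold il; rewrite even_2j, Nat.div2_double; auto. }
    assert (E2 : sumR m (fun j => il d1 d2 (2*j+1)%nat - il c1 c2 (2*j+1)%nat) = sumR m (fun k => d2 k - c2 k)).
    { apply sumR_ext; intros; unfold il; rewrite even_2j1, div2_2j1; auto. }
    rewrite E1, E2. specialize (A3 m). specialize (B3 m). lra.
Qed.

Lemma negligible_point p : negligible (fun y => y = p).
Proof.
  intros eps He. exists (fun k => match k with O => p - eps/4 | _ => 0 end), (fun k => match k with O => p + eps/4 | _ => 0 end).
  split; [|split].
  - intros y ->. exists O. lra.
  - intros [|k]; lra.
  - assert (forall m, sumR m (fun k => match k with O => p + eps/4 | _ => 0 end - match k with O => p - eps/4 | _ => 0 end) <= eps/2).
    { induction m. simpl; lra. destruct m. simpl; lra. simpl sumR. simpl in IHm. lra. }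
    intros m; specialize (H m); lra.
Qed.

Lemma ae_combine a b (P Q S : R -> Prop) : ae_on a b P -> ae_on a b Q ->
  (forall t, a <= t <= b -> P t -> Q t -> S t) -> ae_on a b S.
Proof.
  intros HP HQ H. unfold ae_on in *. eapply negligible_sub; [|apply (negligible_union _ _ HP HQ)].
  intros y [Hy HS]. destruct (classic (P y)); [|left; auto]. right; split; auto.
Qed.

Lemma ae_sub a b (P Q : R -> Prop) : ae_on a b P -> (forall t, a <= t <= b -> P t -> Q t) -> ae_on a b Q.
Proof. intros HP H. apply (ae_combine a b P P); auto. Qed.

Lemma ae_refl a b c (P : R -> Prop) : c = a + b -> ae_on a b P -> ae_on a b (fun t => P (c - t)).
Proof.
  intros Hc HP. unfold ae_on in *. eapply negligible_sub; [|apply (negligible_refl _ c HP)].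
  intros y [Hy HS]. cbv beta. split; auto. lra.
Qed.

Lemma ae_point a b p : ae_on a b (fun t => t <> p).
Proof. unfold ae_on. eapply negligible_sub; [|apply (negligible_point p)]. intros y [_ H]. apply NNPP; auto. Qed.

Lemma ae_restr a b b' (P : R -> Prop) : b' <= b -> ae_on a b P -> ae_on a b' P.
Proof. intros Hb HP. unfold ae_on in *. eapply negligible_sub; [|apply HP]. intros y [Hy HS]. split; auto. lra. Qed.

Lemma deriv_restr a b b' f t l : b' <= b -> has_deriv_in a b f t l -> has_deriv_in a b' f t l.
Proof. intros Hb H eps He. destruct (H eps He) as [d [Hd H']]. exists d; split; auto. intros; apply H'; auto; lra. Qed.

Lemma deriv_minus a b f g t l1 l2 : has_deriv_in a b f t l1 -> has_deriv_in a b g t l2 ->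
  has_deriv_in a b (fun y => f y - g y) t (l1 - l2).
Proof.
  intros Hf Hg eps He. destruct (Hf (eps/2) ltac:(lra)) as [d1 [Hd1 H1]]. destruct (Hg (eps/2) ltac:(lra)) as [d2 [Hd2 H2]].
  exists (Rmin d1 d2). split; [apply Rmin_glb_lt; auto|]. intros y Hy Hyt Hd.
  pose proof (Rmin_l d1 d2). pose proof (Rmin_r d1 d2).
  specialize (H1 y Hy Hyt ltac:(lra)). specialize (H2 y Hy Hyt ltac:(lra)).
  replace ((f y - g y - (f t - g t)) / (y - t) - (l1 - l2)) with
    (((f y - f t) / (y - t) - l1) - ((g y - g t) / (y - t) - l2)) by (field; apply Rminus_eq_contra; auto).
  eapply Rle_lt_trans; [apply Rabs_triang|]. rewrite Rabs_Ropp. lra.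
Qed.

Lemma deriv_sign a b f t l s : Rabs s = 1 -> has_deriv_in a b f t l -> has_deriv_in a b (fun y => s * f y) t (s * l).
Proof.
  intros Hs Hf eps He. destruct (Hf eps He) as [d [Hd H]]. exists d; split; auto. intros y Hy Hyt Hd'.
  replace ((s * f y - s * f t) / (y - t) - s * l) with (s * ((f y - f t) / (y - t) - l)) by (field; apply Rminus_eq_contra; auto).
  rewrite Rabs_mult, Hs. rewrite Rmult_1_l. auto.
Qed.

Lemma deriv_refl a b c f t l : c = a + b -> has_deriv_in a b f (c - t) l -> has_deriv_in a b (fun y => f (c - y)) t (- l).
Proof.
  intros Hc Hf eps He. destruct (Hf eps He) as [d [Hd H]]. exists d; split; auto. intros y Hy Hyt Hd'.
  assert (Hyt' : c - y <> c - t) by (intro E; apply Hyt; lra).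
  specialize (H (c - y) ltac:(lra) Hyt' ltac:(replace (c - y - (c - t)) with (-(y - t)) by ring; rewrite Rabs_Ropp; auto)).
  replace ((f (c - y) - f (c - t)) / (y - t) - - l) with (- ((f (c - y) - f (c - t)) / (c - y - (c - t)) - l)).
  rewrite Rabs_Ropp; auto.
  field. split; apply Rminus_eq_contra; auto.
Qed.

Lemma deriv_unique a b f g t l1 l2 : a < b -> a <= t <= b -> (forall y, a <= y <= b -> f y = g y) ->
  has_deriv_in a b f t l1 -> has_deriv_in a b g t l2 -> l1 = l2.
Proof.
  intros Hab Ht Hfg H1 H2. destruct (Req_dec l1 l2) as [E|E]; auto. exfalso.
  pose proof (Rabs_pos_lt (l1 - l2) (Rminus_eq_contra _ _ E)) as Hp.
  set (e := Rabs (l1 - l2) / 2).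
  destruct (H1 e ltac:(unfold e; lra)) as [d1 [Hd1 K1]]. destruct (H2 e ltac:(unfold e; lra)) as [d2 [Hd2 K2]].
  set (r := Rmin (Rmin d1 d2) ((b-a)/2) / 2).
  assert (Hr1 : r < d1) by (unfold r; pose proof (Rmin_l (Rmin d1 d2) ((b-a)/2)); pose proof (Rmin_l d1 d2); lra).
  assert (Hr2 : r < d2) by (unfold r; pose proof (Rmin_l (Rmin d1 d2) ((b-a)/2)); pose proof (Rmin_r d1 d2); lra).
  assert (Hr3 : r <= (b-a)/4) by (unfold r; pose proof (Rmin_r (Rmin d1 d2) ((b-a)/2)); lra).
  assert (Hr0 : 0 < r) by (unfold r; apply Rdiv_lt_0_compat; [repeat apply Rmin_glb_lt|]; lra).
  assert (exists y, a <= y <= b /\ y <> t /\ Rabs (y - t) = r) as [y [Hy [Hyt Hyr]]].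
  { destruct (Rle_dec (t + r) b).
    - exists (t + r). split; [lra|split]. intro; lra. replace (t + r - t) with r by ring. apply Rabs_right; lra.
    - exists (t - r). split; [lra|split]. intro; lra. replace (t - r - t) with (- r) by ring. rewrite Rabs_Ropp. apply Rabs_right; lra. }
  specialize (K1 y Hy Hyt ltac:(lra)). specialize (K2 y Hy Hyt ltac:(lra)).
  rewrite <- (Hfg y Hy), <- (Hfg t Ht) in K2.
  apply Rabs_def2 in K1. apply Rabs_def2 in K2. unfold e in *.
  revert K1 K2 Hp. unfold Rabs; destruct Rcase_abs; intros; lra.
Qed.

Lemma Rabs_tri4 A B C D : Rabs ((A - B) - (C - D)) <= Rabs (A - C) + Rabs (B - D).
Proof. unfold Rabs; repeat destruct Rcase_abs; lra. Qed.

Lemma abs_cont_minus a b f g : abs_cont a b f -> abs_cont a b g -> abs_cont a b (fun y => f y - g y).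
Proof.
  intros Hf Hg eps He. destruct (Hf (eps/2) ltac:(lra)) as [d1 [Hd1 H1]]. destruct (Hg (eps/2) ltac:(lra)) as [d2 [Hd2 H2]].
  exists (Rmin d1 d2). split; [apply Rmin_glb_lt; auto|]. intros m c d Hi Hdis Hs.
  pose proof (Rmin_l d1 d2). pose proof (Rmin_r d1 d2).
  specialize (H1 m c d Hi Hdis ltac:(lra)). specialize (H2 m c d Hi Hdis ltac:(lra)).
  eapply Rle_lt_trans. apply (sumR_le _ _ (fun i => Rabs (f (d i) - f (c i)) + Rabs (g (d i) - g (c i)))).
  intros; apply Rabs_tri4. rewrite sumR_plus. lra.
Qed.

Lemma abs_cont_sign a b f s : Rabs s = 1 -> abs_cont a b f -> abs_cont a b (fun y => s * f y).
Proof.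
  intros Hs Hf eps He. destruct (Hf eps He) as [d [Hd H]]. exists d; split; auto. intros m c d' Hi Hdis Hsum.
  rewrite (sumR_ext _ _ (fun i => Rabs (f (d' i) - f (c i)))). auto.
  intros i _. replace (s * f (d' i) - s * f (c i)) with (s * (f (d' i) - f (c i))) by ring. rewrite Rabs_mult, Hs; ring.
Qed.

Lemma abs_cont_refl a b c f : c = a + b -> abs_cont a b f -> abs_cont a b (fun y => f (c - y)).
Proof.
  intros Hc Hf eps He. destruct (Hf eps He) as [d [Hd H]]. exists d; split; auto. intros m cs ds Hi Hdis Hsum.
  specialize (H m (fun i => c - ds i) (fun i => c - cs i)).
  rewrite (sumR_ext _ _ (fun i => Rabs (f (c - cs i) - f (c - ds i)))).
  apply H.
  - intros i Hi'. specialize (Hi i Hi'). lra.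
  - intros i j Hi' Hj' Hij. destruct (Hdis i j Hi' Hj' Hij); [right|left]; lra.
  - rewrite (sumR_ext _ _ (fun i => ds i - cs i)); auto. intros; ring.
  - intros i _. apply Rabs_minus_sym.
Qed.

Lemma abs_cont_restr a b b' f : b' <= b -> abs_cont a b f -> abs_cont a b' f.
Proof.
  intros Hb Hf eps He. destruct (Hf eps He) as [d [Hd H]]. exists d; split; auto. intros m c d' Hi Hdis Hsum.
  apply H; auto. intros i Hi'. specialize (Hi i Hi'). lra.
Qed.

Definition refl (c : R) (D : nat -> R -> R) : nat -> R -> R := fun k t => (-1)^k * D k (c - t).

Lemma W_sol_minus N a b D1 D2 : W_sol N a b D1 -> W_sol N a b D2 -> W_sol N a b (fun k t => D1 k t - D2 k t).
Proof.
  intros [A1 [B1 C1]] [A2 [B2 C2]]. split; [|split].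
  - intros k Hk t Ht. apply deriv_minus; [apply A1|apply A2]; auto.
  - apply abs_cont_minus; auto.
  - apply (ae_combine _ _ _ _ _ C1 C2). intros t _ H1 H2. apply deriv_minus; auto.
Qed.

Lemma W_sol_restr N a b b' D : b' <= b -> W_sol N a b D -> W_sol N a b' D.
Proof.
  intros Hb [A [B C]]. split; [|split].
  - intros k Hk t Ht. apply (deriv_restr a b); auto. apply A; auto; lra.
  - apply (abs_cont_restr a b); auto.
  - eapply ae_sub. apply (ae_restr a b); eauto. intros t _ H. apply (deriv_restr a b); auto.
Qed.

Lemma W_sol_refl N a b c D : (1 <= N)%nat -> c = a + b -> W_sol N a b D -> W_sol N a b (refl c D).
Proof.
  intros HN Hc [A [B C]]. destruct N as [|N']; [lia|]. unfold W_sol, refl. replace (S N' - 1)%nat with N' in * by lia.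
  split; [|split].
  - intros k Hk t Ht. replace ((-1)^(S k) * D (S k) (c - t)) with ((-1)^k * (- D (S k) (c - t))) by (simpl; ring).
    apply (deriv_sign a b (fun y => D k (c - y))). apply pow_1_abs. apply (deriv_refl a b c); auto. apply A; [lia|]. split; lra.
  - apply (abs_cont_sign a b (fun y => D N' (c - y))). apply pow_1_abs. apply abs_cont_refl; auto.
  - eapply ae_sub. apply (ae_refl a b c _ Hc C). intros t Ht H. cbv beta in H.
    replace ((-1)^(S N') * D (S N') (c - t)) with ((-1)^N' * (- D (S N') (c - t))) by (simpl; ring).
    apply (deriv_sign a b (fun y => D N' (c - y))). apply pow_1_abs. apply (deriv_refl a b c); auto.
Qed.

Lemma pow_neg1 k : (-1)^k = if Nat.odd k then -1 else 1.
Proof.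
  assert (forall k, (-1)^k = (if Nat.even k then 1 else -1) /\ (-1)^(S k) = (if Nat.even (S k) then 1 else -1)).
  { induction k0. simpl; split; ring. destruct IHk0 as [H1 H2]. split; auto.
    change ((-1)^(S (S k0))) with (-1 * (-1 * (-1)^k0)). change (Nat.even (S (S k0))) with (Nat.even k0).
    rewrite H1. destruct (Nat.even k0); ring. }
  destruct (H k) as [H1 _]. rewrite H1. unfold Nat.odd. destruct (Nat.even k); simpl; reflexivity.
Qed.

Lemma pow_odd k : (-1)^(2*k+1) = -1.
Proof. rewrite pow_add, pow_1_even. ring. Qed.

Lemma ext_coef_refl T a k t : t <> T -> ext_coef T a k t * (-1)^k = ext_coef T a k (2*T - t).
Proof.
  intros Ht. unfold ext_coef. destruct (Rtotal_order t T) as [Hlt|[Heq|Hgt]]; [|contradiction|].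
  - destruct (Rle_dec t T); [|lra]. destruct (Rle_dec (2*T - t) T); [lra|].
    replace (2*T - (2*T - t)) with t by ring. rewrite pow_neg1. destruct (Nat.odd k); ring.
  - destruct (Rle_dec t T); [lra|]. destruct (Rle_dec (2*T - t) T); [|lra].
    rewrite pow_neg1. destruct (Nat.odd k); ring.
Qed.

Lemma op_minus N c D1 D2 t : op N c (fun k t => D1 k t - D2 k t) t = op N c D1 t - op N c D2 t.
Proof. unfold op. rewrite (sumR_ext _ _ (fun k => c k t * D1 k t - c k t * D2 k t)) by (intros; ring).
  rewrite sumR_minus. ring. Qed.

Lemma op_refl n T a D t : t <> T ->
  op (2*n) (ext_coef T a) (refl (2*T) D) t = op (2*n) (ext_coef T a) D (2*T - t).
Proof.
  intros Ht. unfold op, refl. rewrite pow_1_even. f_equal. ring.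
  apply sumR_ext. intros k _. rewrite <- (ext_coef_refl T a k t Ht). ring.
Qed.

Lemma op_ext N c1 c2 D t : (forall k, (k < N)%nat -> c1 k t = c2 k t) -> op N c1 D t = op N c2 D t.
Proof. intros H. unfold op. f_equal. apply sumR_ext. intros k Hk. rewrite H; auto. Qed.

Definition symm (N : nat) (T : R) (D : nat -> R -> R) : Prop :=
  forall k, (k <= N - 1)%nat -> forall t, 0 <= t <= 2*T -> D k t = (-1)^k * D k (2*T - t).

Lemma core n T a (BC2 BC1 : (nat -> R -> R) -> Prop) G2 G1 :
  (1 <= n)%nat -> 0 < T ->
  (forall D1 D2, BC2 D1 -> BC2 D2 -> BC2 (fun k t => D1 k t - D2 k t)) ->
  (forall D, BC2 D -> BC2 (refl (2*T) D)) ->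
  (forall D1 D2, BC1 D1 -> BC1 D2 -> BC1 (fun k t => D1 k t - D2 k t)) ->
  (forall D, BC2 D -> symm (2*n) T D -> BC1 D) ->
  green_function (2*n) (ext_coef T a) 0 (2*T) BC2 G2 ->
  green_function (2*n) a 0 T BC1 G1 ->
  forall al be t0, 0 <= al -> al < be -> be < T -> 0 <= t0 <= T ->
  exists V, has_integral (fun s => G1 t0 s * ind al be s) 0 T V /\
            has_integral (fun s => G2 t0 s * (ind al be s + ind (2*T - be) (2*T - al) s)) 0 (2*T) V.
Proof.
  intros Hn HT HB2m HB2r HB1m HB21 [Hnr2 [_ Hex2]] [Hnr1 [_ Hex1]] al be t0 Hal Hab Hbe Ht0.
  set (sg := ind al be). set (st := fun s => ind al be s + ind (2*T - be) (2*T - al) s).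
  assert (Lst : L1 0 (2*T) st).
  { exists (1 * (be - al) + 1 * ((2*T - al) - (2*T - be))).
    eapply has_integral_ext; [| reflexivity | apply has_integral_lin; apply has_integral_ind; lra].
    intros s _. unfold st; ring. }
  assert (Hst : forall t, st (2*T - t) = st t).
  { intros t. unfold st, ind. repeat destruct Rle_dec; lra. }
  destruct (Hex2 st Lst) as [D [HW [HBC [Hop Hint]]]].
  set (Dr := refl (2*T) D).
  assert (HWr : W_sol (2*n) 0 (2*T) Dr) by (apply W_sol_refl; [lia|ring|auto]).
  assert (Hopr : ae_on 0 (2*T) (fun t => op (2*n) (ext_coef T a) Dr t = st t)).
  { eapply ae_combine. apply (ae_refl 0 (2*T) (2*T) _ ltac:(ring) Hop). apply (ae_point 0 (2*T) T).
    intros t Ht H1 H2. cbv beta in H1. unfold Dr. rewrite op_refl; auto. rewrite H1. apply Hst. }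
  assert (HE : forall t, 0 <= t <= 2*T -> D 0%nat t - Dr 0%nat t = 0).
  { apply (Hnr2 (fun k t => D k t - Dr k t)).
    - apply W_sol_minus; auto.
    - apply HB2m; auto. unfold Dr; apply HB2r; auto.
    - eapply ae_combine. apply Hop. apply Hopr. intros t _ H1 H2. rewrite op_minus. lra. }
  assert (Hsym : forall k, (k <= 2*n-1)%nat -> forall t, 0 <= t <= 2*T -> D k t = Dr k t).
  { induction k.
    - intros _ t Ht. specialize (HE t Ht). lra.
    - intros Hk t Ht. destruct HW as [Hd _]. destruct HWr as [Hdr _].
      apply (deriv_unique 0 (2*T) (D k) (Dr k) t); auto; try lra.
      + intros y Hy. apply IHk; auto; lia.
      + apply Hd; auto; lia.
      + apply Hdr; auto; lia. }
  assert (HB1 : BC1 D).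
  { apply HB21; [exact HBC|]. intros k Hk t Ht. rewrite (Hsym k Hk t Ht). reflexivity. }
  assert (HW1 : W_sol (2*n) 0 T D) by (apply (W_sol_restr _ 0 (2*T)); auto; lra).
  assert (Hop1 : ae_on 0 T (fun t => op (2*n) a D t = sg t)).
  { eapply ae_sub. apply (ae_restr 0 (2*T)); [lra|apply Hop]. intros t Ht H.
    rewrite <- (op_ext _ (ext_coef T a)). rewrite H. unfold st, sg. unfold ind at 2.
    destruct (Rle_dec (2*T - be) t); [lra|]. ring.
    intros k _. unfold ext_coef. destruct (Rle_dec t T); [reflexivity|lra]. }
  assert (Lsg : L1 0 T sg) by (exists (be - al); apply has_integral_ind; lra).
  destruct (Hex1 sg Lsg) as [DN [HWN [HBCN [HopN HintN]]]].
  assert (HE1 : forall t, 0 <= t <= T -> DN 0%nat t - D 0%nat t = 0).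
  { apply (Hnr1 (fun k t => DN k t - D k t)).
    - apply W_sol_minus; auto.
    - apply HB1m; auto.
    - eapply ae_combine. apply HopN. apply Hop1. intros t _ H1 H2. rewrite op_minus. lra. }
  exists (D 0%nat t0). split.
  - replace (D 0%nat t0) with (DN 0%nat t0) by (specialize (HE1 t0 Ht0); lra). apply HintN; auto.
  - apply Hint. lra.
Qed.

Lemma sign_lemma T G1 G2 t0 s0 : 0 < T -> cont_on_square 0 T G1 -> nonpos_on (2*T) G2 -> 0 <= t0 <= T -> 0 <= s0 <= T ->
  (forall al be, 0 <= al -> al < be -> be < T -> exists V, has_integral (fun s => G1 t0 s * ind al be s) 0 T V /\
            has_integral (fun s => G2 t0 s * (ind al be s + ind (2*T - be) (2*T - al) s)) 0 (2*T) V) ->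
  G1 t0 s0 <= 0.
Proof.
  intros HT Hc Hnp Ht0 Hs0 Hint. apply Rnot_lt_le; intro Hpos.
  set (c := G1 t0 s0 / 2).
  destruct (Hc t0 s0 Ht0 Hs0 c ltac:(unfold c; lra)) as [del [Hdel Hcd]].
  set (h := Rmin del T / 2).
  assert (Hh1 : h <= del / 2) by (unfold h; pose proof (Rmin_l del T); lra).
  assert (Hh2 : h <= T / 2) by (unfold h; pose proof (Rmin_r del T); lra).
  assert (Hh0 : 0 < h) by (unfold h; apply Rdiv_lt_0_compat; [apply Rmin_glb_lt|]; lra).
  assert (exists al be, 0 <= al /\ al < be /\ be < T /\ forall s, al <= s <= be -> Rabs (s - s0) < del)
    as [al [be [Hal [Hab [Hbe Hs]]]]].
  { destruct (Rle_dec (s0 - h) 0).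
    - exists 0, (h/2). repeat split; try lra. intros s Hs. apply Rabs_def1; lra.
    - exists (s0 - h), (s0 - h/2). repeat split; try lra. intros s Hs. apply Rabs_def1; lra. }
  destruct (Hint al be Hal Hab Hbe) as [V [H1 H2]].
  assert (Hle : V <= 0).
  { assert (0 <= -1 * V + 0 * V); [|lra].
    eapply has_integral_nonneg. apply (has_integral_lin _ _ _ _ _ _ (-1) 0 H2 H2).
    intros s Hs'. cbv beta. pose proof (ind_01 al be s). pose proof (ind_01 (2*T-be) (2*T-al) s).
    assert (G2 t0 s <= 0) by (apply Hnp; lra). nra. }
  assert (Hge : 0 <= 1 * V + (- c) * (be - al)).
  { eapply has_integral_nonneg. apply (has_integral_lin _ _ _ _ _ _ 1 (-c) H1 (has_integral_ind 0 T al be Hal Hab ltac:(lra))).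
    intros s Hs'. cbv beta. unfold ind. destruct (Rle_dec al s); [destruct (Rle_dec s be)|]; try lra.
    assert (Rabs (G1 t0 s - G1 t0 s0) < c).
    { apply Hcd; [exact Ht0 | lra | apply Rabs_def1; lra | apply Hs; lra]. }
    apply Rabs_def2 in H. unfold c in *. lra. }
  assert (0 < c * (be - al)) by (apply Rmult_lt_0_compat; unfold c; lra). lra.
Qed.

Lemma cont_neg a b G : cont_on_square a b G -> cont_on_square a b (fun t s => - G t s).
Proof.
  intros H t s Ht Hs eps He. destruct (H t s Ht Hs eps He) as [d [Hd H']]. exists d; split; auto.
  intros. replace (- G t' s' - - G t s) with (- (G t' s' - G t s)) by ring. rewrite Rabs_Ropp. auto.
Qed.

Lemma sign_lemma' T G1 G2 t0 s0 : 0 < T -> cont_on_square 0 T G1 -> nonneg_on (2*T) G2 -> 0 <= t0 <= T -> 0 <= s0 <= T ->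
  (forall al be, 0 <= al -> al < be -> be < T -> exists V, has_integral (fun s => G1 t0 s * ind al be s) 0 T V /\
            has_integral (fun s => G2 t0 s * (ind al be s + ind (2*T - be) (2*T - al) s)) 0 (2*T) V) ->
  0 <= G1 t0 s0.
Proof.
  intros HT Hc Hnn Ht0 Hs0 Hint.
  assert (- G1 t0 s0 <= 0); [|lra].
  apply (sign_lemma T (fun t s => - G1 t s) (fun t s => - G2 t s)); auto.
  - apply cont_neg; auto.
  - intros t s Ht Hs. specialize (Hnn t s Ht Hs). lra.
  - intros al be Hal Hab Hbe. destruct (Hint al be Hal Hab Hbe) as [V [H1 H2]]. exists (-V). split.
    + pose proof (has_integral_lin _ _ _ _ _ _ (-1) 0 H1 H1) as K. eapply has_integral_ext; [ | | exact K]; [intros; cbv beta; ring| ring].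
    + pose proof (has_integral_lin _ _ _ _ _ _ (-1) 0 H2 H2) as K. eapply has_integral_ext; [ | | exact K]; [intros; cbv beta; ring| ring].
Qed.

Lemma BCP_minus n L : forall D1 D2, BC_P n L D1 -> BC_P n L D2 -> BC_P n L (fun k t => D1 k t - D2 k t).
Proof. intros D1 D2 H1 H2 k Hk. cbv beta. rewrite (H1 k Hk), (H2 k Hk). reflexivity. Qed.
Lemma BCN_minus n L : forall D1 D2, BC_N n L D1 -> BC_N n L D2 -> BC_N n L (fun k t => D1 k t - D2 k t).
Proof. intros D1 D2 H1 H2 k Hk. cbv beta. destruct (H1 k Hk), (H2 k Hk). split; lra. Qed.
Lemma BCD_minus n L : forall D1 D2, BC_D n L D1 -> BC_D n L D2 -> BC_D n L (fun k t => D1 k t - D2 k t).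
Proof. intros D1 D2 H1 H2 k Hk. cbv beta. destruct (H1 k Hk), (H2 k Hk). split; lra. Qed.
Lemma BCM_minus n L : forall D1 D2, BC_M2 n L D1 -> BC_M2 n L D2 -> BC_M2 n L (fun k t => D1 k t - D2 k t).
Proof. intros D1 D2 H1 H2 k Hk. cbv beta. destruct (H1 k Hk), (H2 k Hk). split; lra. Qed.

Lemma BCP_refl n T : forall D, BC_P n (2*T) D -> BC_P n (2*T) (refl (2*T) D).
Proof. intros D H k Hk. unfold refl. replace (2*T - 0) with (2*T) by ring. replace (2*T - 2*T) with 0 by ring.
  rewrite (H k Hk). reflexivity. Qed.
Lemma BCN_refl n T : forall D, BC_N n (2*T) D -> BC_N n (2*T) (refl (2*T) D).
Proof. intros D H k Hk. unfold refl. replace (2*T - 0) with (2*T) by ring. replace (2*T - 2*T) with 0 by ring.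
  destruct (H k Hk) as [A B]. rewrite A, B. split; ring. Qed.
Lemma BCD_refl n T : forall D, BC_D n (2*T) D -> BC_D n (2*T) (refl (2*T) D).
Proof. intros D H k Hk. unfold refl. replace (2*T - 0) with (2*T) by ring. replace (2*T - 2*T) with 0 by ring.
  destruct (H k Hk) as [A B]. rewrite A, B. split; ring. Qed.

Lemma BCP_sym n T : 0 < T -> forall D, BC_P n (2*T) D -> symm (2*n) T D -> BC_N n T D.
Proof.
  intros HT D HP Hs k Hk.
  pose proof (Hs (2*k+1)%nat ltac:(lia) 0 ltac:(lra)) as h0. pose proof (Hs (2*k+1)%nat ltac:(lia) T ltac:(lra)) as h1.
  pose proof (HP (2*k+1)%nat ltac:(lia)) as hp. rewrite pow_odd in h0, h1.
  replace (2*T - 0) with (2*T) in h0 by ring. replace (2*T - T) with T in h1 by ring. split; lra.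
Qed.
Lemma BCN_sym n T : 0 < T -> forall D, BC_N n (2*T) D -> symm (2*n) T D -> BC_N n T D.
Proof.
  intros HT D HP Hs k Hk.
  pose proof (Hs (2*k+1)%nat ltac:(lia) T ltac:(lra)) as h1.
  pose proof (HP k Hk) as [hp _]. rewrite pow_odd in h1.
  replace (2*T - T) with T in h1 by ring. split; lra.
Qed.
Lemma BCD_sym n T : 0 < T -> forall D, BC_D n (2*T) D -> symm (2*n) T D -> BC_M2 n T D.
Proof.
  intros HT D HP Hs k Hk.
  pose proof (Hs (2*k+1)%nat ltac:(lia) T ltac:(lra)) as h1.
  pose proof (HP k Hk) as [hp _]. rewrite pow_odd in h1.
  replace (2*T - T) with T in h1 by ring. split; lra.
Qed.

Theorem corollary5p2 (n : nat) (T : R) (a : nat -> R -> R) :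
  (1 <= n)%nat -> 0 < T ->
  (forall k, (k < 2 * n)%nat -> L1 0 T (a k)) ->
  let N := (2 * n)%nat in
  let at_ := ext_coef T a in
  (forall GP GN,
     green_function N at_ 0 (2 * T) (BC_P n (2 * T)) GP ->
     green_function N a 0 T (BC_N n T) GN ->
     nonpos_on (2 * T) GP -> nonpos_on T GN) /\
  (forall GP GN,
     green_function N at_ 0 (2 * T) (BC_P n (2 * T)) GP ->
     green_function N a 0 T (BC_N n T) GN ->
     nonneg_on (2 * T) GP -> nonneg_on T GN) /\
  (forall G2 GN,
     green_function N at_ 0 (2 * T) (BC_N n (2 * T)) G2 ->
     green_function N a 0 T (BC_N n T) GN ->
     nonpos_on (2 * T) G2 -> nonpos_on T GN) /\
  (forall G2 GN,
     green_function N at_ 0 (2 * T) (BC_N n (2 * T)) G2 ->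
     green_function N a 0 T (BC_N n T) GN ->
     nonneg_on (2 * T) G2 -> nonneg_on T GN) /\
  (forall GD GM,
     green_function N at_ 0 (2 * T) (BC_D n (2 * T)) GD ->
     green_function N a 0 T (BC_M2 n T) GM ->
     nonpos_on (2 * T) GD -> nonpos_on T GM) /\
  (forall GD GM,
     green_function N at_ 0 (2 * T) (BC_D n (2 * T)) GD ->
     green_function N a 0 T (BC_M2 n T) GM ->
     nonneg_on (2 * T) GD -> nonneg_on T GM).
Proof.
  intros Hn HT _. cbv zeta.
  split; [|split; [|split; [|split; [|split]]]]; intros G2 G1 H2 H1 Hsg t s Ht Hs.
  - apply (sign_lemma T G1 G2); auto. apply (proj1 (proj2 H1)).
    intros. eapply (core n T a (BC_P n (2*T)) (BC_N n T)); eauto.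
    apply BCP_minus. apply BCP_refl. apply BCN_minus. apply BCP_sym; auto.
  - apply (sign_lemma' T G1 G2); auto. apply (proj1 (proj2 H1)).
    intros. eapply (core n T a (BC_P n (2*T)) (BC_N n T)); eauto.
    apply BCP_minus. apply BCP_refl. apply BCN_minus. apply BCP_sym; auto.
  - apply (sign_lemma T G1 G2); auto. apply (proj1 (proj2 H1)).
    intros. eapply (core n T a (BC_N n (2*T)) (BC_N n T)); eauto.
    apply BCN_minus. apply BCN_refl. apply BCN_minus. apply BCN_sym; auto.
  - apply (sign_lemma' T G1 G2); auto. apply (proj1 (proj2 H1)).
    intros. eapply (core n T a (BC_N n (2*T)) (BC_N n T)); eauto.
    apply BCN_minus. apply BCN_refl. apply BCN_minus. apply BCN_sym; auto.
  - apply (sign_lemma T G1 G2); auto. apply (proj1 (proj2 H1)).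
    intros. eapply (core n T a (BC_D n (2*T)) (BC_M2 n T)); eauto.
    apply BCD_minus. apply BCD_refl. apply BCM_minus. apply BCD_sym; auto.
  - apply (sign_lemma' T G1 G2); auto. apply (proj1 (proj2 H1)).
    intros. eapply (core n T a (BC_D n (2*T)) (BC_M2 n T)); eauto.
    apply BCD_minus. apply BCD_refl. apply BCM_minus. apply BCD_sym; auto.
Qed.
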